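(* Let $\mathbf{x}_i\in\chi$ be a constellation point whose Voronoi region $\mathcal{D}_{i,\mathrm{ML}}$ is unbounded. Let $\mathbf{x}_p,\mathbf{x}_q\in\chi$ be the two points of $\chi$ that are adjacent to $\mathbf{x}_i$ along the boundary of $\mathrm{conv}\,\chi$, i.e., the points of $\chi\cap\partial(\mathrm{conv}\,\chi)$ immediately preceding and following $\mathbf{x}_i$ when this boundary is traversed cyclically. Then $\mathcal{D}_{i,\mathrm{DP}}$ is a polyhedral angle with vertex $\mathbf{x}_i$: there is a closed pointed convex cone $K\neq\{\mathbf{0}\}$ in $\mathbb{R}^2$ with $\mathcal{D}_{i,\mathrm{DP}}=\mathbf{x}_i+K$, and $K$ is bounded by two rays (which coincide when $\mathbf{x}_i$ is not a vertex of $\mathrm{conv}\,\chi$), one orthogonal to $\mathbf{x}_i-\mathbf{x}_p$ and the other orthogonal to $\mathbf{x}_i-\mathbf{x}_q$.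
   Context: A constellation is a finite set $\chi=\{\mathbf{x}_1,\dots,\mathbf{x}_M\}\subset\mathbb{R}^2$ of distinct points, $M\ge 3$, not all lying on one line. The Voronoi region of $\mathbf{x}_i$ is $\mathcal{D}_{i,\mathrm{ML}}=\{\mathbf{x}\in\mathbb{R}^2:\|\mathbf{x}-\mathbf{x}_i\|\le\|\mathbf{x}-\mathbf{x}_j\|\ \forall j\}$. Two distinct points $\mathbf{x}_i,\mathbf{x}_j$ are neighbors if their Voronoi regions share an edge (a common boundary segment or ray of positive length); $\mathcal{S}_i$ denotes the set of neighbors of $\mathbf{x}_i$. With $\mathbf{a}_{i,j}=\mathbf{x}_i-\mathbf{x}_j$, $b_{i,j}=\mathbf{a}_{i,j}^T(\mathbf{x}_i+\mathbf{x}_j)/2$ and $c_{i,j}=\|\mathbf{x}_i-\mathbf{x}_j\|^2/2$, one has $\mathcal{D}_{i,\mathrm{ML}}=\{\mathbf{x}:\mathbf{a}_{i,j}^T\mathbf{x}\ge b_{i,j}\ \forall \mathbf{x}_j\in\mathcal{S}_i\}$, and the distance preserving constructive interference region (DPCIR) of $\mathbf{x}_i$ is $\mathcal{D}_{i,\mathrm{DP}}=\{\mathbf{x}\in\mathbb{R}^2:\mathbf{a}_{i,j}^T\mathbf{x}\ge b_{i,j}+c_{i,j}\ \forall \mathbf{x}_j\in\mathcal{S}_i\}=\{\mathbf{x}:(\mathbf{x}_i-\mathbf{x}_j)^T(\mathbf{x}-\mathbf{x}_i)\ge 0\ \forall\mathbf{x}_j\in\mathcal{S}_i\}$. $\mathrm{conv}\,\chi$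 is the convex hull of $\chi$. *)

(* Defs.v *)
(* Points of the plane R^2 are pairs (R * R) over a real
   closed field R (e.g. the reals); pairs carry MathComp's zmod
   structure, so +, - and 0 act componentwise; smul is scaling. *)
From HB Require Import structures.
From mathcomp Require Import all_boot all_order all_algebra.
Set Implicit Arguments. Unset Strict Implicit. Unset Printing Implicit Defensive.
Import Order.TTheory GRing.Theory Num.Theory.
Local Open Scope ring_scope.

Section Geometry.
Variable R : rcfType.

Definition pt := (R * R)%type.

Definition dot (u v : pt) : R := u.1 * v.1 + u.2 * v.2.
Definition smul (t : R) (u : pt) : pt := (t * u.1, t * u.2).

Definition sqdist (x y : pt) : R := dot (x - y) (x - y).

Definition all_collinear (chi : seq pt) : Prop :=
  exists a b c : R, (a != 0 \/ b != 0) /\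
    forall x, x \in chi -> a * x.1 + b * x.2 = c.

Definition constellation (chi : seq pt) : Prop :=
  uniq chi /\ (3 <= size chi)%N /\ ~ all_collinear chi.

Definition voronoi (chi : seq pt) (xi : pt) (x : pt) : Prop :=
  forall xj, xj \in chi -> sqdist x xi <= sqdist x xj.

Definition on_segment (y z x : pt) : Prop :=
  exists t : R, 0 <= t <= 1 /\ x = y + smul t (z - y).

Definition neighbors (chi : seq pt) (xi xj : pt) : Prop :=
  xj \in chi /\ xj != xi /\
  exists y z : pt, y != z /\
    forall x, on_segment y z x -> voronoi chi xi x /\ voronoi chi xj x.

Definition dpcir (chi : seq pt) (xi : pt) (x : pt) : Prop :=
  forall xj, neighbors chi xi xj -> 0 <= dot (xi - xj) (x - xi).

Definition bounded (S : pt -> Prop) : Prop :=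
  exists M : R, forall x, S x -> `|x.1| <= M /\ `|x.2| <= M.

Definition conv (chi : seq pt) (x : pt) : Prop :=
  exists w : nat -> R, (forall k, 0 <= w k) /\
    \sum_(k < size chi) w k = 1 /\
    x = \sum_(k < size chi) smul (w k) (nth 0 chi k).

Definition boundary (S : pt -> Prop) (x : pt) : Prop :=
  (forall eps : R, 0 < eps -> exists y, S y /\ sqdist y x < eps) /\
  (forall eps : R, 0 < eps -> exists y, ~ S y /\ sqdist y x < eps).

(* xp is adjacent to xi along the boundary of conv chi: the segment
   [xi, xp] runs along the boundary of conv chi and contains no other point
   of chi, i.e. xp immediately precedes or follows xi when the points of
   chi on the boundary are traversed cyclically. *)
Definition hull_adjacent (chi : seq pt) (xi xp : pt) : Prop :=
  xp \in chi /\ xp != xi /\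
  (forall x, on_segment xi xp x -> boundary (conv chi) x) /\
  (forall xk, xk \in chi -> xk != xi -> xk != xp -> ~ on_segment xi xp xk).

Definition cone2 (u v : pt) (k : pt) : Prop :=
  exists a b : R, 0 <= a /\ 0 <= b /\ k = smul a u + smul b v.

Definition pointed (K : pt -> Prop) : Prop :=
  forall k, K k -> K (- k) -> k = 0.

End Geometry.

(* Main.v *)
Require Import Defs.
From HB Require Import structures.
From mathcomp Require Import all_boot all_order all_algebra.
From mathcomp Require Import ring lra.
Import Order.TTheory GRing.Theory Num.Theory.
Local Open Scope ring_scope.

Lemma sum_pt (R : rcfType) n (F : 'I_n -> pt R) :
  \sum_(k < n) F k = (\sum_(k < n) (F k).1, \sum_(k < n) (F k).2).
Proof.
elim/big_rec3: _ => [|i x y z _ ->] //.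
Qed.

Lemma sum_delta (R : rcfType) n i (c : R) : (i < n)%N ->
  \sum_(k < n) (c * (k == i :> nat)%:R) = c.
Proof.
move=> Hi; rewrite (bigD1 (Ordinal Hi)) //= eqxx mulr1 big1 ?addr0 //.
move=> k; rewrite -val_eqE /= => /negbTE ->; by rewrite mulr0.
Qed.

Lemma affine_sq (R : rcfType) (a b y z : pt R) t :
  sqdist (y + smul t (z - y)) a - sqdist (y + smul t (z - y)) b =
  (1 - t) * (sqdist y a - sqdist y b) + t * (sqdist z a - sqdist z b).
Proof.
case: a b y z => [a1 a2] [b1 b2] [y1 y2] [z1 z2].
rewrite /sqdist /dot /smul /=. ring.
Qed.

Lemma nb_of_two (R : rcfType) (chi : seq (pt R)) xi xj y z :
  xj \in chi -> xj != xi -> y != z ->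
  voronoi chi xi y -> voronoi chi xi z ->
  sqdist y xi = sqdist y xj -> sqdist z xi = sqdist z xj ->
  neighbors chi xi xj.
Proof.
move=> Hj Hne Hyz Vy Vz Ey Ez; split=> //; split=> //.
exists y, z; split=> // x [t [/andP [t0 t1] ->]].
have Hv : voronoi chi xi (y + smul t (z - y)).
  move=> xk Hk; rewrite -subr_ge0 affine_sq.
  have h1 := Vy _ Hk; have h2 := Vz _ Hk.
  rewrite -subr_ge0 in h1; rewrite -subr_ge0 in h2.
  apply: addr_ge0; apply: mulr_ge0 => //; by rewrite subr_ge0.
split; first exact: Hv.
move=> xk Hk.
have E : sqdist (y + smul t (z - y)) xj - sqdist (y + smul t (z - y)) xi = 0.
  by rewrite affine_sq -Ey -Ez !subrr !mulr0 addr0.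
move/eqP: E; rewrite subr_eq0 => /eqP ->; exact: Hv.
Qed.
Lemma argmin_seq (R : rcfType) (T : eqType) (f : T -> R) (l : seq T) :
  l != [::] -> exists2 x, x \in l & forall y, y \in l -> f x <= f y.
Proof.
elim: l => [//|a l IH] _.
case: (eqVneq l [::]) => [->|ne].
  by exists a; rewrite ?mem_seq1 // => y; rewrite mem_seq1 => /eqP ->.
have [x xl Hx] := IH ne.
case: (lerP (f a) (f x)) => h.
  exists a; first by rewrite mem_head.
  move=> y; rewrite in_cons => /orP [/eqP ->//|/Hx]; exact: le_trans.
exists x; first by rewrite in_cons xl orbT.
move=> y; rewrite in_cons => /orP [/eqP ->|/Hx//]; exact: ltW.
Qed.

Lemma ev_list (R : rcfType) (T : eqType) (P : T -> R -> Prop) (l : seq T) :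
  (forall x, x \in l -> exists s0, forall s, s0 <= s -> P x s) ->
  exists s0, forall s, s0 <= s -> forall x, x \in l -> P x s.
Proof.
elim: l => [|a l IH] H; first by exists 0.
have [s1 H1] := H a (mem_head _ _).
have [s2 H2] : exists s0, forall s, s0 <= s -> forall x, x \in l -> P x s.
  by apply: IH => x xl; apply: H; rewrite in_cons xl orbT.
exists (Num.max s1 s2) => s; rewrite ge_max => /andP [h1 h2] x.
rewrite in_cons => /orP [/eqP ->|xl]; [exact: H1 | exact: H2].
Qed.

Lemma small_list (R : rcfType) (T : eqType) (P : T -> R -> Prop) (l : seq T) :
  (forall x, x \in l -> exists2 s0, 0 < s0 & forall s, 0 < s <= s0 -> P x s) ->
  exists2 s0, 0 < s0 & forall s, 0 < s <= s0 -> forall x, x \in l -> P x s.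
Proof.
elim: l => [|a l IH] H; first by exists 1.
have [s1 p1 H1] := H a (mem_head _ _).
have [s2 p2 H2] : exists2 s0, 0 < s0 & forall s, 0 < s <= s0 -> forall x, x \in l -> P x s.
  by apply: IH => x xl; apply: H; rewrite in_cons xl orbT.
exists (Num.min s1 s2); first by rewrite lt_min p1 p2.
move=> s /andP [s0]; rewrite le_min => /andP [h1 h2] x.
rewrite in_cons => /orP [/eqP ->|xl]; [apply: H1 | apply: H2] => //; by rewrite s0.
Qed.

Lemma conv3 (R : rcfType) (chi : seq (pt R)) a b c wa wb wc :
  a \in chi -> b \in chi -> c \in chi -> 0 <= wa -> 0 <= wb -> 0 <= wc ->
  wa + wb + wc = 1 ->
  conv chi (smul wa a + smul wb b + smul wc c).
Proof.
move=> Ha Hb Hc pa pb pc S.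
have ia := (index_mem a chi); rewrite Ha in ia.
have ib := (index_mem b chi); rewrite Hb in ib.
have ic := (index_mem c chi); rewrite Hc in ic.
exists (fun k => wa * (k == index a chi)%:R + wb * (k == index b chi)%:R
                 + wc * (k == index c chi)%:R).
split; [move=> k; rewrite !addr_ge0 // mulr_ge0 // ler0n |split].
  by rewrite !big_split /= !sum_delta.
rewrite sum_pt /smul /=.
have E : forall (F : pt R) i, (i < size chi)%N -> nth 0 chi i = F ->
   forall w : R, (\sum_(k < size chi) (w * (k == i :> nat)%:R * (nth 0 chi k).1) = w * F.1)
   /\ (\sum_(k < size chi) (w * (k == i :> nat)%:R * (nth 0 chi k).2) = w * F.2).
  move=> F i Hi HF w; split.
    rewrite (bigD1 (Ordinal Hi)) //= eqxx mulr1 HF big1 ?addr0 //.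
    move=> k; rewrite -val_eqE /= => /negbTE ->; by rewrite mulr0 mul0r.
  rewrite (bigD1 (Ordinal Hi)) //= eqxx mulr1 HF big1 ?addr0 //.
  move=> k; rewrite -val_eqE /= => /negbTE ->; by rewrite mulr0 mul0r.
have [A1 A2] := E a _ ia (nth_index 0 Ha) wa.
have [B1 B2] := E b _ ib (nth_index 0 Hb) wb.
have [C1 C2] := E c _ ic (nth_index 0 Hc) wc.
congr (_, _).
  rewrite (eq_bigr (fun k : 'I_(size chi) => wa * (k == index a chi :> nat)%:R * (nth 0 chi k).1 + wb * (k == index b chi :> nat)%:R * (nth 0 chi k).1 + wc * (k == index c chi :> nat)%:R * (nth 0 chi k).1)).
    by rewrite !big_split /= A1 B1 C1.
  by move=> k _; rewrite !mulrDl.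
rewrite (eq_bigr (fun k : 'I_(size chi) => wa * (k == index a chi :> nat)%:R * (nth 0 chi k).2 + wb * (k == index b chi :> nat)%:R * (nth 0 chi k).2 + wc * (k == index c chi :> nat)%:R * (nth 0 chi k).2)).
  by rewrite !big_split /= A2 B2 C2.
by move=> k _; rewrite !mulrDl.
Qed.

Set Implicit Arguments. Unset Strict Implicit.

Definition cross (R : rcfType) (u v : pt R) : R := u.1 * v.2 - u.2 * v.1.

Lemma pt_neq0 (R : rcfType) (e : pt R) : e != 0 -> e.1 != 0 \/ e.2 != 0.
Proof.
case: e => e1 e2 /=; case: (eqVneq e1 0) => [->|h]; last by left.
case: (eqVneq e2 0) => [->|h2]; last by right.
by rewrite eqxx.
Qed.

Lemma sq_gt0 (R : rcfType) (x : R) : x != 0 -> 0 < x ^+ 2.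
Proof. by move=> h; rewrite lt0r sqrf_eq0 h sqr_ge0. Qed.

Lemma dotq_gt0 (R : rcfType) (e : pt R) : e != 0 -> 0 < dot e e.
Proof.
move/pt_neq0; rewrite /dot => [[h|h]]; have := sq_gt0 h;
  have := sqr_ge0 e.1; have := sqr_ge0 e.2; rewrite !expr2; lra.
Qed.

Lemma dot_cross_inj (R : rcfType) (e v w : pt R) : e != 0 ->
  dot e v = dot e w -> cross e v = cross e w -> v = w.
Proof.
move=> /dotq_gt0; case: e v w => [e1 e2] [v1 v2] [w1 w2]; rewrite /dot /cross /= => q h1 h2.
have E1 : (e1 * e1 + e2 * e2) * (v1 - w1) = 0.
  have -> : (e1 * e1 + e2 * e2) * (v1 - w1) = e1 * (e1 * v1 + e2 * v2 - (e1 * w1 + e2 * w2)) - e2 * (e1 * v2 - e2 * v1 - (e1 * w2 - e2 * w1)) by ring.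
  by rewrite h1 h2 !subrr !mulr0 ?subrr.
have E2 : (e1 * e1 + e2 * e2) * (v2 - w2) = 0.
  have -> : (e1 * e1 + e2 * e2) * (v2 - w2) = e2 * (e1 * v1 + e2 * v2 - (e1 * w1 + e2 * w2)) + e1 * (e1 * v2 - e2 * v1 - (e1 * w2 - e2 * w1)) by ring.
  by rewrite h1 h2 !subrr !mulr0 ?addr0.
move/eqP: E1; rewrite mulf_eq0 (gt_eqF q) /= subr_eq0 => /eqP ->.
move/eqP: E2; rewrite mulf_eq0 (gt_eqF q) /= subr_eq0 => /eqP -> //.
Qed.

Lemma perp_parallel (R : rcfType) (n a v : pt R) : n != 0 ->
  dot n a = 0 -> dot n v = 0 -> cross a v = 0.
Proof.
move=> /pt_neq0; case: n a v => [n1 n2] [a1 a2] [v1 v2]; rewrite /dot /cross /= => hn h1 h2.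
have E1 : n1 * (a1 * v2 - a2 * v1) = 0.
  have -> : n1 * (a1 * v2 - a2 * v1) = v2 * (n1 * a1 + n2 * a2) - a2 * (n1 * v1 + n2 * v2) by ring.
  by rewrite h1 h2 !mulr0 subrr.
have E2 : n2 * (a1 * v2 - a2 * v1) = 0.
  have -> : n2 * (a1 * v2 - a2 * v1) = a1 * (n1 * v1 + n2 * v2) - v1 * (n1 * a1 + n2 * a2) by ring.
  by rewrite h1 h2 !mulr0 subrr.
case: hn => hn.
  by move/eqP: E1; rewrite mulf_eq0 (negbTE hn) => /eqP.
by move/eqP: E2; rewrite mulf_eq0 (negbTE hn) => /eqP.
Qed.

Lemma num_core (R : rcfType) (q hh D H G eta : R) :
  0 < q -> 0 < hh -> 0 <= H -> H <= eta -> `|G| <= eta ->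
  (1 + (q + `|D|) / hh) * eta <= q / 2 ->
  0 <= (q / 2 + G - H / hh * D) / q /\ 0 <= H / hh /\
  0 <= 1 - (q / 2 + G - H / hh * D) / q - H / hh.
Proof.
move=> q0 h0 H0 HE GE K.
set b := H / hh; set t := eta / hh.
have b0 : 0 <= b by rewrite divr_ge0 // ltW.
have bt : b <= t by rewrite ler_pM2r // invr_gt0.
have t0 : 0 <= t by apply: le_trans bt.
have Ke : eta + (q + `|D|) * t <= q / 2.
  by move: K; rewrite mulrDl mul1r /t mulrA mulrAC.
have bD : `|b * D| <= t * `|D|.
  by rewrite normrM (ger0_norm b0) ler_wpM2r.
move: bD; rewrite ler_norml => /andP [bD1 bD2].
move: GE; rewrite ler_norml => /andP [G1 G2].
have qb : q * b <= q * t by rewrite ler_wpM2l // ltW.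
have DD : 0 <= `|D| by [].
split; last split => //.
  apply: divr_ge0; last exact: ltW.
  have: 0 <= q * t by rewrite mulr_ge0 // ltW.
  move: Ke; rewrite mulrDl. lra.
have -> : 1 - (q / 2 + G - b * D) / q - b = (q / 2 - G + b * D - q * b) / q.
  by field; rewrite gt_eqF.
apply: divr_ge0; last exact: ltW.
move: Ke; rewrite mulrDl. lra.
Qed.

Lemma comb_dot (R : rcfType) (xi xp y e : pt R) a b :
  dot e ((smul (1 - a - b) xi + smul a xp + smul b y) - xi) = a * dot e (xp - xi) + b * dot e (y - xi).
Proof. case: xi xp y e => [i1 i2] [p1 p2] [y1 y2] [e1 e2]; rewrite /dot /smul /=; ring. Qed.

Lemma comb_cross (R : rcfType) (xi xp y : pt R) a b :
  cross (xp - xi) ((smul (1 - a - b) xi + smul a xp + smul b y) - xi) = b * cross (xp - xi) (y - xi).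
Proof. case: xi xp y => [i1 i2] [p1 p2] [y1 y2]; rewrite /cross /smul /=; ring. Qed.

Lemma tri_comb (R : rcfType) (xi xp y x : pt R) a b :
  xp - xi != 0 ->
  cross (xp - xi) (x - xi) = b * cross (xp - xi) (y - xi) ->
  dot (xp - xi) (x - xi) = a * dot (xp - xi) (xp - xi) + b * dot (xp - xi) (y - xi) ->
  x = smul (1 - a - b) xi + smul a xp + smul b y.
Proof.
move=> ne hc hd.
have E : x - xi = (smul (1 - a - b) xi + smul a xp + smul b y) - xi.
  apply: (dot_cross_inj ne); first by rewrite hd comb_dot.
  by rewrite hc comb_cross.
by move/(congr1 (fun t => t + xi)): E; rewrite !subrK.
Qed.

Lemma sq_bound (R : rcfType) (d1 d2 del : R) : 0 < del ->
  d1 * d1 + d2 * d2 < del ^+ 2 -> `|d1| <= del.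
Proof.
move=> dp h; rewrite ler_norml; apply/andP; split; rewrite expr2 in h; nra.
Qed.

Lemma mid_cross (R : rcfType) (xi xp x : pt R) :
  cross (xp - xi) (x - xi) = (xp - xi).1 * (x.2 - (xi + smul (1/2) (xp - xi)).2)
     - (xp - xi).2 * (x.1 - (xi + smul (1/2) (xp - xi)).1).
Proof. case: xi xp x => [i1 i2] [p1 p2] [x1 x2]; rewrite /cross /smul /=; ring. Qed.

Lemma mid_dot (R : rcfType) (xi xp x : pt R) :
  dot (xp - xi) (x - xi) = dot (xp - xi) (xp - xi) / 2 + ((xp - xi).1 * (x.1 - (xi + smul (1/2) (xp - xi)).1)
     + (xp - xi).2 * (x.2 - (xi + smul (1/2) (xp - xi)).2)).
Proof. case: xi xp x => [i1 i2] [p1 p2] [x1 x2]; rewrite /dot /smul /=; by field. Qed.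

Lemma interior_mid (R : rcfType) (chi : seq (pt R)) xi xp y1 y2 :
  xi \in chi -> xp \in chi -> y1 \in chi -> y2 \in chi -> xp - xi != 0 ->
  0 < cross (xp - xi) (y1 - xi) -> cross (xp - xi) (y2 - xi) < 0 ->
  exists2 eps, 0 < eps & forall x, sqdist x (xi + smul (1/2) (xp - xi)) < eps -> conv chi x.
Proof.
move=> Hi Hp Hy1 Hy2 ne c1 c2.
set e := xp - xi in ne c1 c2 *.
set q := dot e e; set h1 := cross e (y1 - xi); set h2 := - cross e (y2 - xi).
set D1 := dot e (y1 - xi); set D2 := dot e (y2 - xi).
set E := `|e.1| + `|e.2| + 1.
set K := 1 + (q + `|D1|) / h1 + (q + `|D2|) / h2.
have q0 : 0 < q by exact: dotq_gt0.
have h20 : 0 < h2 by rewrite /h2 oppr_gt0.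
have E0 : 0 < E by rewrite /E ltr_wpDl // addr_ge0.
have K1 : 0 <= (q + `|D1|) / h1 by apply: divr_ge0; [rewrite addr_ge0 // ltW | exact: ltW].
have K2 : 0 <= (q + `|D2|) / h2 by apply: divr_ge0; [rewrite addr_ge0 // ltW | exact: ltW].
have K0 : 0 < K by rewrite /K -addrA ltr_wpDr // addr_ge0.
set del := q / (2 * E * K).
have del0 : 0 < del by rewrite divr_gt0 // !mulr_gt0.
set eta := E * del.
have eta0 : 0 <= eta by rewrite mulr_ge0 // ltW.
have Keta : K * eta = q / 2.
  by rewrite /eta /del; field; rewrite !gt_eqF.
have Ka : (1 + (q + `|D1|) / h1) * eta <= q / 2.
  rewrite -Keta ler_wpM2r // /K; lra.
have Kb : (1 + (q + `|D2|) / h2) * eta <= q / 2.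
  rewrite -Keta ler_wpM2r // /K; lra.
exists (del ^+ 2); first by rewrite exprn_gt0.
move=> x Hx.
set m := xi + smul (1/2) e in Hx.
set d1 := x.1 - m.1; set d2 := x.2 - m.2.
have Hd : d1 * d1 + d2 * d2 < del ^+ 2 by [].
have bd1 := sq_bound del0 Hd.
have bd2 : `|d2| <= del by apply: (sq_bound (d2 := d1) del0); rewrite addrC.
have Ec : cross e (x - xi) = e.1 * d2 - e.2 * d1 by rewrite /d1 /d2 /m /e mid_cross.
have Ed : dot e (x - xi) = q / 2 + (e.1 * d1 + e.2 * d2) by rewrite /q /d1 /d2 /m /e mid_dot.
have B1 : `|e.1 * d2 - e.2 * d1| <= eta.
  apply: (le_trans (ler_normB _ _)); rewrite !normrM /eta /E.
  have := ler_wpM2l (normr_ge0 e.1) bd2; have := ler_wpM2l (normr_ge0 e.2) bd1.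
  have := normr_ge0 e.1; have := normr_ge0 e.2. nra.
have B2 : `|e.1 * d1 + e.2 * d2| <= eta.
  apply: (le_trans (ler_normD _ _)); rewrite !normrM /eta /E.
  have := ler_wpM2l (normr_ge0 e.1) bd1; have := ler_wpM2l (normr_ge0 e.2) bd2.
  have := normr_ge0 e.1; have := normr_ge0 e.2. nra.
set c := cross e (x - xi) in Ec.
set G := e.1 * d1 + e.2 * d2 in Ed B2.
rewrite -Ec in B1.
case: (lerP 0 c) => cs.
  have [a0 [b0 ab0]] := num_core q0 c1 (normr_ge0 c) B1 B2 Ka.
  set b := `|c| / h1 in b0 ab0; set a := (q / 2 + G - b * D1) / q in a0 ab0.
  have -> : x = smul (1 - a - b) xi + smul a xp + smul b y1.
    apply: tri_comb => //.
      by rewrite -/e -/c -/h1 /b (ger0_norm cs) divfK // gt_eqF.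
    rewrite -/e Ed -/q -/D1 /a; field; by rewrite gt_eqF.
  apply: conv3 => //; ring.
have [a0 [b0 ab0]] := num_core q0 h20 (normr_ge0 c) B1 B2 Kb.
set b := `|c| / h2 in b0 ab0; set a := (q / 2 + G - b * D2) / q in a0 ab0.
have -> : x = smul (1 - a - b) xi + smul a xp + smul b y2.
  apply: tri_comb => //.
    rewrite -/e -/c /b (ltr0_norm cs) /h2; field; by rewrite lt_eqF.
  rewrite -/e Ed -/q -/D2 /a; field; by rewrite gt_eqF.
apply: conv3 => //; ring.
Qed.

Lemma Jdot (R : rcfType) (e v : pt R) : dot (- e.2, e.1) v = cross e v.
Proof. rewrite /dot /cross /=; ring. Qed.

Lemma Jneq0 (R : rcfType) (e : pt R) : e != 0 -> ((- e.2, e.1) : pt R) != 0.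
Proof.
case: e => e1 e2 /pt_neq0 /= h; apply/negP => /eqP [] h2 h1.
have h2' : e2 = 0 by rewrite -[e2]opprK h2 oppr0.
by case: h; rewrite ?h1 ?h2' eqxx.
Qed.

Lemma support_lem (R : rcfType) (chi : seq (pt R)) xi xp :
  xi \in chi -> hull_adjacent chi xi xp ->
  exists n : pt R, n != 0 /\ dot n (xi - xp) = 0 /\
    forall xk, xk \in chi -> dot n (xk - xi) <= 0.
Proof.
move=> Hi [Hp [ne [Hb _]]].
have ne' : xp - xi != 0 by rewrite subr_eq0.
set e := xp - xi in ne' *.
have Hm : boundary (conv chi) (xi + smul (1/2) e).
  apply: Hb; exists (1/2); split=> //.
  apply/andP; split; first by rewrite divr_ge0 ?ler0n.
  by rewrite ler_pdivrMr ?ltr0n // mul1r ler1n.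
have NI : forall y1 y2, y1 \in chi -> y2 \in chi ->
    0 < cross e (y1 - xi) -> cross e (y2 - xi) < 0 -> False.
  move=> y1 y2 h1 h2 c1 c2.
  have [eps ep He] := interior_mid Hi Hp h1 h2 ne' c1 c2.
  have [y [ny hy]] := Hm.2 eps ep.
  by apply: ny; apply: He.
have Ee : dot (- e.2, e.1) (xi - xp) = 0.
  rewrite Jdot -opprB -/e; case: (e) => e1 e2; rewrite /cross /=; ring.
case: (boolP (has (fun y => 0 < cross e (y - xi)) chi)) => [/hasP [y1 h1 c1]|/hasPn hn].
  exists (- (- e.2, e.1)); split; first by rewrite oppr_eq0 Jneq0.
  split; first by rewrite -(oppr0) -Ee; case: (xi - xp) => a b; rewrite /dot /=; ring.
  move=> xk hk.
  have : dot (- (- e.2, e.1)) (xk - xi) = - cross e (xk - xi).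
    rewrite -Jdot; case: (xk - xi) => a b; rewrite /dot /=; ring.
  move=> ->; rewrite oppr_le0; case: (lerP 0 (cross e (xk - xi))) => // c2.
  by case: (NI _ _ h1 hk c1 c2).
exists (- e.2, e.1); split; first exact: Jneq0.
split=> // xk hk; rewrite Jdot.
by have := hn _ hk; rewrite /= -leNgt.
Qed.

Lemma ray_diff (R : rcfType) (m n a b : pt R) s :
  sqdist (m + smul s n) b - sqdist (m + smul s n) a =
  (sqdist m b - sqdist m a) + 2 * s * dot n (a - b).
Proof. case: m n a b => [m1 m2] [n1 n2] [a1 a2] [b1 b2]; rewrite /sqdist /dot /smul /=; ring. Qed.

Lemma lagrange_id (R : rcfType) (e v : pt R) :
  dot e e * dot v v = dot e v ^+ 2 + cross e v ^+ 2.
Proof. case: e v => [e1 e2] [v1 v2]; rewrite /dot /cross /=; ring. Qed.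

Lemma mid_diff (R : rcfType) (xi xp xk : pt R) :
  sqdist (xi + smul (1/2) (xp - xi)) xk - sqdist (xi + smul (1/2) (xp - xi)) xi =
  dot (xk - xi) (xk - xi) - dot (xp - xi) (xk - xi).
Proof. case: xi xp xk => [i1 i2] [p1 p2] [k1 k2]; rewrite /sqdist /dot /smul /=; by field. Qed.

Lemma cross_opp (R : rcfType) (e v : pt R) : cross (- e) v = - cross e v.
Proof. case: e v => [e1 e2] [v1 v2]; rewrite /cross /=; ring. Qed.

Lemma smul_neq (R : rcfType) (m n : pt R) s t : n != 0 -> s != t ->
  m + smul s n != m + smul t n.
Proof.
case: m n => [m1 m2] [n1 n2] /pt_neq0 /= hn hst; apply/negP => /eqP [] h1 h2.
have e1 : (s - t) * n1 = 0 by rewrite mulrBl; apply/eqP; rewrite subr_eq0; apply/eqP; move/addrI: h1.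
have e2 : (s - t) * n2 = 0 by rewrite mulrBl; apply/eqP; rewrite subr_eq0; apply/eqP; move/addrI: h2.
move: hst; rewrite -subr_eq0 => hst.
case: hn => hn.
  by move/eqP: e1; rewrite mulf_eq0 (negbTE hst) (negbTE hn).
by move/eqP: e2; rewrite mulf_eq0 (negbTE hst) (negbTE hn).
Qed.

Lemma edge_nb (R : rcfType) (chi : seq (pt R)) xi xp n :
  xi \in chi -> hull_adjacent chi xi xp -> n != 0 -> dot n (xi - xp) = 0 ->
  (forall xk, xk \in chi -> dot n (xk - xi) <= 0) -> neighbors chi xi xp.
Proof.
move=> Hi HA nn np Hs.
have HA' := HA; case: HA' => [Hp [ne [_ Hseg]]].
have ne' : xp - xi != 0 by rewrite subr_eq0.
set m := xi + smul (1/2) (xp - xi).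
have [s0 Hs0] : exists s0, forall s, s0 <= s -> forall xk, xk \in chi ->
    sqdist (m + smul s n) xi <= sqdist (m + smul s n) xk.
  apply: ev_list => xk hk.
  set c := dot n (xi - xk).
  set del := sqdist m xk - sqdist m xi.
  have c0 : 0 <= c.
    rewrite /c; have := Hs _ hk.
    case: (xi) (xk) (n) => a1 a2 [b1 b2] [n1 n2]; rewrite /dot /=.
    move=> h; lra.
  have dif : forall s, sqdist (m + smul s n) xk - sqdist (m + smul s n) xi = del + 2 * s * c.
    by move=> s; rewrite ray_diff.
  case: (ltrP 0 c) => cp.
    exists (- del / (2 * c)) => s hs; rewrite -subr_ge0 dif.
    have : - del / (2 * c) * c <= s * c by rewrite ler_wpM2r // ltW.
    have -> : - del / (2 * c) * c = - del / 2 by field; rewrite gt_eqF.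
    lra.
  have cz : c = 0 by apply/eqP; rewrite eq_le cp c0.
  exists 0 => s _; rewrite -subr_ge0 dif cz mulr0 addr0.
  have cr : cross (xi - xp) (xk - xi) = 0.
    apply: (perp_parallel nn np).
    by move: cz; rewrite /c; case: (n) (xi) (xk) => [n1 n2] [a1 a2] [b1 b2]; rewrite /dot /= => h; lra.
  have cr' : cross (xp - xi) (xk - xi) = 0.
    by move: cr; rewrite -opprB cross_opp => /eqP; rewrite oppr_eq0 => /eqP.
  set D := dot (xp - xi) (xk - xi).
  set q := dot (xp - xi) (xp - xi).
  have q0 : 0 < q by exact: dotq_gt0.
  have L := lagrange_id (xp - xi) (xk - xi); rewrite cr' -/q -/D expr0n /= addr0 in L.
  have Edel : del = dot (xk - xi) (xk - xi) - D by rewrite /del mid_diff.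
  have Hq : q * del = D * (D - q) by rewrite Edel mulrBr L; ring.
  case: (boolP ((0 < D) && (D < q))) => [/andP [D0 Dq]|].
    exfalso.
    have Hxk : xk = xi + smul (D / q) (xp - xi).
      have E : xk - xi = smul (D / q) (xp - xi).
        apply: (dot_cross_inj ne').
          rewrite -/D; move: q0; rewrite /q; case: (xp - xi) => e1 e2; rewrite /dot /smul /= => q0; field.
          by rewrite gt_eqF.
        by rewrite cr'; case: (xp - xi) => e1 e2; rewrite /cross /smul /=; ring.
      by rewrite -E addrC subrK.
    have onseg : on_segment xi xp xk.
      exists (D / q); split => //; apply/andP; split; first by rewrite divr_ge0 // ltW.
      by rewrite ler_pdivrMr // mul1r ltW.
    case: (eqVneq xk xi) => [hki|hki].
      by move: D0; rewrite /D hki subrr; case: (xp - xi) => e1 e2; rewrite /dot /= !mulr0 addr0 ltxx.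
    case: (eqVneq xk xp) => [hkp|hkp].
      by move: Dq; rewrite /D hkp -/q ltxx.
    exact: (Hseg xk hk hki hkp onseg).
  rewrite negb_and -!leNgt => hD.
  have : 0 <= q * del.
    rewrite Hq; case/orP: hD => hD.
      by rewrite mulr_le0 // subr_le0; apply: le_trans hD (ltW q0).
    by rewrite mulr_ge0 // ?subr_ge0 //; apply: le_trans (ltW q0) hD.
  by rewrite pmulr_rge0.
have Hv : forall s, s0 <= s -> voronoi chi xi (m + smul s n).
  by move=> s hs xk hk; apply: Hs0.
have Heq : forall s, sqdist (m + smul s n) xi = sqdist (m + smul s n) xp.
  move=> s; apply/eqP; rewrite eq_sym -subr_eq0; apply/eqP.
  rewrite ray_diff np mulr0 addr0 /m mid_diff.
  by case: (xp - xi) => e1 e2; rewrite /dot /= subrr.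
apply: (@nb_of_two _ chi xi xp (m + smul s0 n) (m + smul (s0 + 1) n)) => //.
- by apply: smul_neq => //; rewrite eq_sym -subr_eq0 addrAC subrr add0r oner_eq0.
- by apply: Hv.
- by apply: Hv; rewrite lerDl.
Qed.

Lemma ystar_diff (R : rcfType) (xi n xk : pt R) t :
  sqdist (xi + smul (- t) n) xk - sqdist (xi + smul (- t) n) xi =
  dot (xk - xi) (xk - xi) - 2 * t * dot n (xi - xk).
Proof. case: xi n xk => [i1 i2] [n1 n2] [k1 k2]; rewrite /sqdist /dot /smul /=; ring. Qed.

Lemma dot_self0 (R : rcfType) (v : pt R) : dot v v = 0 -> v = 0.
Proof.
case: (eqVneq v 0) => // /dotq_gt0 h e; by rewrite e ltxx in h.
Qed.

Lemma inner_nb (R : rcfType) (chi : seq (pt R)) xi n :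
  xi \in chi -> n != 0 -> (forall xk, xk \in chi -> dot n (xk - xi) <= 0) ->
  (exists2 xk, xk \in chi & dot n (xk - xi) < 0) ->
  exists xj, neighbors chi xi xj /\ dot n (xj - xi) < 0.
Proof.
move=> Hi nn Hs [xk0 hk0 ck0].
pose c xk := dot n (xi - xk).
have cE : forall xk, c xk = - dot n (xk - xi).
  by move=> xk; rewrite /c; case: (n) (xi) (xk) => [n1 n2] [a1 a2] [b1 b2]; rewrite /dot /=; ring.
have c0 : forall xk, xk \in chi -> 0 <= c xk by move=> xk hk; rewrite cE oppr_ge0 Hs.
pose g xk := dot (xk - xi) (xk - xi) / (2 * c xk).
pose I := [seq xk <- chi | 0 < c xk].
have I0 : I != [::].
  apply/negP => /eqP I0; have : xk0 \in I by rewrite mem_filter cE oppr_gt0 ck0.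
  by rewrite I0.
have [xj0 hj0 Hmin] := @argmin_seq R (pt R) g I I0.
set ts := g xj0.
set ys := xi + smul (- ts) n.
have fE : forall xk, sqdist ys xk - sqdist ys xi = dot (xk - xi) (xk - xi) - 2 * ts * c xk.
  by move=> xk; rewrite ystar_diff.
have fge : forall xk, xk \in chi -> 0 <= sqdist ys xk - sqdist ys xi.
  move=> xk hk; rewrite fE; case: (ltrP 0 (c xk)) => cp.
    have : ts <= g xk by apply: Hmin; rewrite mem_filter cp.
    rewrite /g ler_pdivlMr ?mulr_gt0 // => h; rewrite subr_ge0; lra.
  have -> : c xk = 0 by apply/eqP; rewrite eq_le cp c0.
  rewrite mulr0 subr0; case: (xk - xi) => a b; rewrite /dot /=.
  by rewrite addr_ge0 // -expr2 sqr_ge0.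
pose J := [seq xk <- I | g xk == ts].
have J0 : J != [::].
  apply/negP => /eqP J0; have : xj0 \in J by rewrite mem_filter eqxx hj0.
  by rewrite J0.
pose p : pt R := (- n.2, n.1).
pose r xk := dot p (xk - xi) / c xk.
have [xj hj Hr] := @argmin_seq R (pt R) r J J0.
move: (hj); rewrite mem_filter => /andP [/eqP gj]; rewrite mem_filter => /andP [cj hjc].
pose w : pt R := smul (dot p (xj - xi)) (- n) - smul (c xj) p.
have wvj : dot w (xj - xi) = 0.
  rewrite /w cE; case: (n) (xj - xi) => [n1 n2] [v1 v2]; rewrite /dot /smul /p /=; ring.
have wvk : forall xk, xk \in J -> dot w (xk - xi) <= 0.
  move=> xk hk; have := Hr _ hk.
  move: hk; rewrite mem_filter => /andP [_]; rewrite mem_filter => /andP [ck _].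
  rewrite /r ler_pdivrMr // mulrAC ler_pdivlMr // => h.
  have -> : dot w (xk - xi) = dot p (xj - xi) * c xk - c xj * dot p (xk - xi).
    rewrite /w !cE; case: (n) (xj - xi) (xk - xi) => [n1 n2] [v1 v2] [u1 u2].
    rewrite /dot /smul /p /=; ring.
  by rewrite subr_le0 [c xj * _]mulrC.
have wn0 : w != 0.
  apply/negP => /eqP w0.
  have : dot w p = - (c xj * dot p p).
    rewrite /w /dot /smul /p /=; ring.
  rewrite w0 {1}/dot /= !mul0r addr0 => /eqP; rewrite eq_sym oppr_eq0 mulf_eq0 gt_eqF //=.
  by rewrite gt_eqF // dotq_gt0 // Jneq0.
have [s0 s0p Hsm] : exists2 s0, 0 < s0 & forall s, 0 < s <= s0 -> forall xk, xk \in chi ->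
    0 <= (sqdist ys xk - sqdist ys xi) + 2 * s * dot w (xi - xk).
  apply: small_list => xk hk.
  have dE : dot w (xi - xk) = - dot w (xk - xi).
    by case: (w) (xi) (xk) => [w1 w2] [a1 a2] [b1 b2]; rewrite /dot /=; ring.
  have F := fge _ hk.
  case: (lerP 0 (dot w (xi - xk))) => dp.
    exists 1 => // s /andP [sp _]; apply: addr_ge0 => //.
    by rewrite mulr_ge0 // mulr_ge0 // ltW.
  have Fp : 0 < sqdist ys xk - sqdist ys xi.
    rewrite lt0r F andbT; apply/negP => /eqP F0.
    case: (ltrP 0 (c xk)) => cp.
      have hkJ : xk \in J.
        rewrite mem_filter mem_filter cp hk andbT andbT.
        move: F0; rewrite fE -/ts /g => /eqP; rewrite subr_eq0 => /eqP ->.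
        by apply/eqP; field; rewrite gt_eqF.
      by move: (wvk _ hkJ); rewrite -oppr_ge0 -dE leNgt dp.
    have cz : c xk = 0 by apply/eqP; rewrite eq_le cp c0.
    move: F0; rewrite fE cz mulr0 subr0 => /dot_self0 v0.
    by move: dp; rewrite dE v0; rewrite /dot /= !mulr0 addr0 oppr0 ltxx.
  exists ((sqdist ys xk - sqdist ys xi) / (2 * - dot w (xi - xk))).
    by rewrite divr_gt0 // mulr_gt0 // oppr_gt0.
  move=> s /andP [sp]; rewrite ler_pdivlMr ?mulr_gt0 ?oppr_gt0 // => h.
  have : 0 < - dot w (xi - xk) by rewrite oppr_gt0.
  nra.
have Hz : voronoi chi xi (ys + smul s0 w).
  move=> xk hk; rewrite -subr_ge0 ray_diff.
  by apply: Hsm => //; rewrite s0p lexx.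
have Hy : voronoi chi xi ys by move=> xk hk; rewrite -subr_ge0; exact: fge.
have fj : sqdist ys xj - sqdist ys xi = 0.
  by rewrite fE -/ts -gj /g; field; rewrite gt_eqF.
exists xj; split; last by rewrite -oppr_gt0 -cE.
apply: (@nb_of_two _ chi xi xj ys (ys + smul s0 w)) => //.
- by apply/negP => /eqP e; move: cj; rewrite e /c subrr /dot /= !mulr0 addr0 ltxx.
- have := @smul_neq _ ys w 0 s0 wn0; rewrite eq_sym gt_eqF // => /(_ isT).
  by have -> : ys + smul 0 w = ys by case: (ys) (w) => [a b] [u v]; rewrite /smul /= !mul0r !addr0.
- by apply/eqP; rewrite eq_sym -subr_eq0 fj.
- apply/eqP; rewrite eq_sym -subr_eq0 ray_diff fj add0r.
  have -> : dot w (xi - xj) = - dot w (xj - xi).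
    by case: (w) (xi) (xj) => [w1 w2] [a1 a2] [b1 b2]; rewrite /dot /=; ring.
  by rewrite wvj oppr0 mulr0.
Qed.


Lemma dotC (R : rcfType) (u v : pt R) : dot u v = dot v u.
Proof. rewrite /dot; ring. Qed.

Lemma dot_subC (R : rcfType) (u a b : pt R) : dot u (a - b) = - dot u (b - a).
Proof. rewrite /dot /=; ring. Qed.

Lemma dot_smulDr (R : rcfType) (u p q : pt R) al be :
  dot u (smul al p + smul be q) = al * dot u p + be * dot u q.
Proof. rewrite /dot /smul /=; ring. Qed.

Lemma cone_dp (R : rcfType) (chi : seq (pt R)) xi u v k :
  (forall xk, xk \in chi -> dot u (xk - xi) <= 0) ->
  (forall xk, xk \in chi -> dot v (xk - xi) <= 0) ->
  cone2 u v k -> dpcir chi xi (xi + k).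
Proof.
move=> Hu Hv [al [be [a0 [b0 ->]]]] xj [hj _].
rewrite [xi + _]addrC addrK.
rewrite dot_smulDr (dotC (xi - xj) u) (dotC (xi - xj) v) !(dot_subC _ xi xj).
apply: addr_ge0; apply: mulr_ge0 => //; rewrite oppr_ge0; [exact: Hu | exact: Hv].
Qed.

Lemma inj2 (R : rcfType) (a b v w : pt R) : cross a b != 0 ->
  dot a v = dot a w -> dot b v = dot b w -> v = w.
Proof.
case: a b v w => [a1 a2] [b1 b2] [v1 v2] [w1 w2]; rewrite /dot /cross /= => h h1 h2.
have E1 : (a1 * b2 - a2 * b1) * (v1 - w1) = 0.
  have -> : (a1 * b2 - a2 * b1) * (v1 - w1) = b2 * (a1 * v1 + a2 * v2 - (a1 * w1 + a2 * w2)) - a2 * (b1 * v1 + b2 * v2 - (b1 * w1 + b2 * w2)) by ring.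
  by rewrite h1 h2 !subrr !mulr0 ?subrr.
have E2 : (a1 * b2 - a2 * b1) * (v2 - w2) = 0.
  have -> : (a1 * b2 - a2 * b1) * (v2 - w2) = a1 * (b1 * v1 + b2 * v2 - (b1 * w1 + b2 * w2)) - b1 * (a1 * v1 + a2 * v2 - (a1 * w1 + a2 * w2)) by ring.
  by rewrite h1 h2 !subrr !mulr0 ?subrr.
move/eqP: E1; rewrite mulf_eq0 (negbTE h) /= subr_eq0 => /eqP ->.
by move/eqP: E2; rewrite mulf_eq0 (negbTE h) /= subr_eq0 => /eqP ->.
Qed.

Lemma par_decomp (R : rcfType) (a b : pt R) : a != 0 -> cross a b = 0 ->
  b = smul (dot a b / dot a a) a.
Proof.
move=> na cr; have q0 := dotq_gt0 na.
apply: (dot_cross_inj na).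
  move: q0; case: (a) => a1 a2; rewrite /dot /smul /= => q0; field; by rewrite gt_eqF.
by rewrite cr; case: (a) => a1 a2; rewrite /cross /smul /=; ring.
Qed.

Lemma cross_negneg (R : rcfType) (e f : pt R) : cross (- e) (- f) = cross e f.
Proof. rewrite /cross /=; ring. Qed.

Lemma dot_negneg (R : rcfType) (e f : pt R) : dot (- e) (- f) = dot e f.
Proof. rewrite /dot /=; ring. Qed.

Lemma cross_anti (R : rcfType) (e f : pt R) : cross f e = - cross e f.
Proof. rewrite /cross /=; ring. Qed.

Lemma opp_dir (R : rcfType) (chi : seq (pt R)) xi xp xq :
  hull_adjacent chi xi xp -> hull_adjacent chi xi xq -> xp != xq ->
  cross (xi - xp) (xi - xq) = 0 -> dot (xi - xp) (xi - xq) < 0.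
Proof.
move=> [Hp [nep [_ Sp]]] [Hq [neq [_ Sq]]] pq.
rewrite -(opprB xp) -(opprB xq) cross_negneg dot_negneg.
have e0 : xp - xi != 0 by rewrite subr_eq0.
have f0 : xq - xi != 0 by rewrite subr_eq0.
set e := xp - xi in e0 *; set f := xq - xi in f0 *.
move=> cr; rewrite ltNge; apply/negP => D0.
have qe := dotq_gt0 e0; have qf := dotq_gt0 f0.
have L := lagrange_id e f; rewrite cr expr0n /= addr0 in L.
have Dp : 0 < dot e f.
  rewrite lt0r D0 andbT; apply/negP => /eqP D; rewrite D expr0n /= in L.
  by move/eqP: L; rewrite mulf_eq0 !gt_eqF.
have Hf := par_decomp e0 cr.
set mu := dot e f / dot e e in Hf.
have mu0 : 0 < mu by rewrite divr_gt0.
case: (lerP mu 1) => m1.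
  apply: (Sp xq Hq neq); first by rewrite eq_sym.
  exists mu; split; first by rewrite (ltW mu0) m1.
  by rewrite -Hf /f addrC subrK.
apply: (Sq xp Hp nep pq).
exists (1 / mu); split.
  rewrite divr_ge0 ?ler01 ?(ltW mu0) //=.
  by rewrite ler_pdivrMr // mul1r ltW.
have -> : smul (1 / mu) (xq - xi) = xp - xi.
  rewrite -/f Hf /e; move: mu0; case: (xp - xi) => e1 e2 mu0; rewrite /smul /=.
  congr (_, _); field; by rewrite gt_eqF.
by rewrite addrC subrK.
Qed.

Unset Implicit Arguments.

Theorem lemma2 (R : rcfType) (chi : seq (pt R)) (xi xp xq : pt R) :
  constellation chi ->
  xi \in chi ->
  ~ bounded (voronoi chi xi) ->
  hull_adjacent chi xi xp ->
  hull_adjacent chi xi xq ->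
  xp != xq ->
  exists u v : pt R,
    u != 0 /\ v != 0 /\
    dot u (xi - xp) = 0 /\ dot v (xi - xq) = 0 /\
    pointed (cone2 u v) /\
    (forall x, dpcir chi xi x <-> exists k, cone2 u v k /\ x = xi + k).
Proof.
move=> [_ [_ Hnc]] Hi _ HAp HAq npq.
have [np [np0 [npa Hnp]]] := support_lem Hi HAp.
have [nq [nq0 [nqb Hnq]]] := support_lem Hi HAq.
have Nbp := edge_nb Hi HAp np0 npa Hnp.
have Nbq := edge_nb Hi HAq nq0 nqb Hnq.
have Hp := HAp.1; have Hq := HAq.1.
have a0 : xi - xp != 0 by rewrite subr_eq0 eq_sym; case: HAp => _ [].
have b0 : xi - xq != 0 by rewrite subr_eq0 eq_sym; case: HAq => _ [].
have Dp : forall x, dpcir chi xi x -> 0 <= dot (xi - xp) (x - xi) /\ 0 <= dot (xi - xq) (x - xi).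
  by move=> x H; split; apply: H.
have Hopp := opp_dir HAp HAq npq.
set a := xi - xp in a0 npa Dp Hopp *; set b := xi - xq in b0 nqb Dp Hopp *.
case: (eqVneq (cross a b) 0) => cab.
  have ab0 := Hopp cab.
  have Hb := par_decomp a0 cab.
  have nb : dot np b = 0.
    rewrite Hb; set mu := (dot a b / dot a a).
    have -> : dot np (smul mu a) = mu * dot np a by rewrite /dot /smul /=; ring.
    by rewrite npa mulr0.
  have qn := dotq_gt0 np0.
  have Kc : forall k, cone2 np np k -> exists2 s, 0 <= s & k = smul s np.
    move=> k [al [be [al0 [be0 ->]]]]; exists (al + be); first exact: addr_ge0.
    by case: (np) => n1 n2; rewrite /smul /=; congr (_, _) => /=; ring.
  exists np, np; split=> //; split=> //; split=> //; split=> //; split.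
    move=> k Hk Hnk.
    have [s s0 ks] := Kc _ Hk; have [s' s0' ks'] := Kc _ Hnk.
    have E : dot np k = s * dot np np by rewrite ks dotC /dot /smul /=; ring.
    have E' : dot np (- k) = s' * dot np np by rewrite ks' dotC /dot /smul /=; ring.
    have E2 : dot np (- k) = - dot np k by rewrite /dot /=; ring.
    have sz : s = 0.
      have : s * dot np np + s' * dot np np = 0 by rewrite -E -E' E2 addrN.
      rewrite -mulrDl => /eqP; rewrite mulf_eq0 (gt_eqF qn) orbF paddr_eq0 // => /andP [/eqP //].
    by rewrite ks sz /smul /= !mul0r.
  move=> x; split; last by move=> [k [Hk ->]]; exact: (cone_dp Hnp Hnp Hk).
  move=> H; have [h1 h2] := Dp x H.
  set d := x - xi in h1 h2.
  have ad : dot a d = 0.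
    have : dot b d = dot a b / dot a a * dot a d.
      by rewrite {1}Hb /dot /smul /=; ring.
    move=> E; move: h2; rewrite E.
    have qa := dotq_gt0 a0.
    have mu : dot a b / dot a a < 0 by rewrite pmulr_llt0 // invr_gt0.
    move=> h2; apply/eqP; rewrite eq_le h1 andbT.
    by rewrite -(nmulr_rge0 _ mu).
  have cr : cross np d = 0 by apply: (perp_parallel a0) => //; rewrite dotC.
  have Hd := par_decomp np0 cr.
  set g := dot np d / dot np np in Hd.
  have [xk hk ck] : exists2 xk, xk \in chi & dot np (xk - xi) < 0.
    case: (boolP (has (fun xk => dot np (xk - xi) < 0) chi)) => [/hasP [xk hk ck]|/hasPn hn].
      by exists xk.
    exfalso; apply: Hnc; exists np.1, np.2, (dot np xi); split; first exact: pt_neq0.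
    move=> y hy; have := hn _ hy; rewrite /= -leNgt => h; have := Hnp _ hy.
    move: h; rewrite /dot /= => h h'; lra.
  have [xj [Nj cj]] := inner_nb Hi np0 Hnp (ex_intro2 _ _ xk hk ck).
  have := H _ Nj; rewrite -/d Hd.
  have -> : dot (xi - xj) (smul g np) = g * - dot np (xj - xi) by rewrite /dot /smul /=; ring.
  rewrite pmulr_lge0 ?oppr_gt0 // => g0.
  exists d; split; last by rewrite /d addrC subrK.
  exists g, 0; split=> //; split=> //.
  by rewrite {1}Hd /smul /= !mul0r !addr0.
have pb : 0 < dot np b.
  rewrite lt0r; apply/andP; split.
    apply/negP => /eqP h; move/eqP: cab; apply; exact: perp_parallel np0 npa h.
  by rewrite /b dot_subC oppr_ge0 Hnp.
have qa : 0 < dot nq a.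
  rewrite lt0r; apply/andP; split.
    apply/negP => /eqP h; move/eqP: cab; apply.
    by rewrite cross_anti (perp_parallel nq0 nqb h) oppr0.
  by rewrite /a dot_subC oppr_ge0 Hnq.
have Kc : forall k, cone2 np nq k -> 0 <= dot a k /\ 0 <= dot b k.
  move=> k [al [be [al0 [be0 ->]]]]; rewrite !dot_smulDr.
  rewrite !(dotC a) !(dotC b) npa nqb !mulr0 add0r addr0.
  by split; apply: mulr_ge0 => //; apply: ltW.
exists np, nq; split=> //; split=> //; split=> //; split=> //; split.
  move=> k Hk Hnk.
  have [h1 h2] := Kc _ Hk; have [h3 h4] := Kc _ Hnk.
  have E : forall u, dot u (- k) = - dot u k by move=> u; rewrite /dot /=; ring.
  rewrite E oppr_ge0 in h3; rewrite E oppr_ge0 in h4.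
  apply: (inj2 cab); rewrite /dot /= !mulr0 addr0.
    by apply/eqP; rewrite eq_le h3 h1.
  by apply/eqP; rewrite eq_le h4 h2.
move=> x; split; last by move=> [k [Hk ->]]; exact: (cone_dp Hnp Hnq Hk).
move=> H; have [h1 h2] := Dp x H.
set d := x - xi in h1 h2.
exists d; split; last by rewrite /d addrC subrK.
exists (dot b d / dot b np), (dot a d / dot a nq).
split; first by rewrite divr_ge0 // ltW // dotC.
split; first by rewrite divr_ge0 // ltW // dotC.
apply: (inj2 cab); rewrite dot_smulDr.
  rewrite (dotC a np) npa mulr0 add0r; field; by rewrite dotC gt_eqF.
rewrite (dotC b nq) nqb mulr0 addr0; field; by rewrite dotC gt_eqF.
Qed.
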